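(* Let $L$ be a Lie conformal superalgebra with $Z_L(L')=0$, where $L'$ is the derived subalgebra of $L$, and let $A$ be an associative commutative algebra with unity. If every linear super-commuting map on $L$ belongs to $\mathrm{Cent}(L)$, then every linear super-commuting map on the current Lie conformal superalgebra $L\otimes A$ belongs to $\mathrm{Cent}(L\otimes A)$.
   Context: A Lie conformal superalgebra is a $\mathbb{Z}_2$-graded $\mathbb{C}[\partial]$-module with a $\mathbb{C}$-linear $\lambda$-bracket into $\mathbb{C}[\lambda]\otimes L$ satisfying $[\partial x_\lambda y]=-\lambda[x_\lambda y]$, $[x_\lambda\partial y]=(\partial+\lambda)[x_\lambda y]$, $[x_\lambda y]=-(-1)^{|x||y|}[y_{-\lambda-\partial}x]$, $[x_\lambda[y_\mu z]]=[[x_\lambda y]_{\lambda+\mu}z]+(-1)^{|x||y|}[y_\mu[x_\lambda z]]$. The derived subalgebra $L'$ is the span of all coefficients of brackets $[x_\lambda y]$, $x,y\in L$. For $S\subseteq L$, the centralizer is $Z_L(S)=\{x\in L:[x_\lambda y]=0\ \forall y\in S\}$. The current Lie conformal superalgebra $L\otimes A$ has grading $|x\otimes a|=|x|$, $\partial(x\otimes a)=\partial x\otimes a$, and bracket $[(x\otimes a)_\lambda(y\otimes b)]=[x_\lambda y]\otimes ab$. A super-commuting map on a Lie conformal superalgebra $\mathcal L$ is a map $\Psi_\lambda:\mathcal L\to\mathbb{C}[\lambda]\otimes\mathcal L$, homogeneous of degree $|\Psi|$, with $[\Psi_\lambda(u)_{\lambda+\mu}u]=0$ for all $u\in\mathcal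 L$. The centroid $\mathrm{Cent}(\mathcal L)$ consists of linear maps $\alpha_\lambda:\mathcal L\to\mathbb{C}[\lambda]\otimes\mathcal L$ of degree $|\alpha|$ with $\alpha_\lambda([x_\mu y])=(-1)^{|x||\alpha|}[x_\mu\alpha_\lambda(y)]=[\alpha_\lambda(x)_\mu y]$ for all homogeneous $x,y$. *)

(* Defs.v *)
(* Elements of C[lambda] (x) L are represented by
   their coefficient sequences (seq L, coefficient of lambda^k = nth 0 s k);
   elements of C[lambda,mu] (x) L are compared coefficientwise. *)
From HB Require Import structures.
From mathcomp Require Import all_boot all_algebra.
From mathcomp Require Import complex reals.

Set Implicit Arguments.
Unset Strict Implicit.
Unset Printing Implicit Defensive.

Import GRing.Theory.
Local Open Scope ring_scope.

Section LCSA.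

Variable C : comPzRingType.

Definition coef (L : lmodType C) (s : seq L) (k : nat) : L := nth 0 s k.

Definition sgn (b : bool) : C := if b then -1 else 1.

(* Given F a b = coefficient of lambda^a nu^b of an element of
   C[lambda,nu] (x) L, this is the coefficient of lambda^i mu^j after the
   substitution nu := lambda + mu. *)
Definition subst_sum (L : lmodType C) (F : nat -> nat -> L) (i j : nat) : L :=
  \sum_(t < i.+1) F (i - t)%N (j + t)%N *+ 'C(j + t, t).

Record lcsa_data (L : lmodType C) := LcsaData {
  par : bool -> L -> L;          (* projection onto L_0 (false) / L_1 (true) *)
  der : L -> L;                  (* the action of d (partial) *)
  br  : L -> L -> seq L          (* [x_lambda y], coefficients in lambda *)
}.

Variable L : lmodType C.
Variable S : lcsa_data L.

Definition lin (U V : lmodType C) (f : U -> V) :=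
  forall (c : C) (u v : U), f (c *: u + v) = c *: f u + f v.

Definition homog (b : bool) (x : L) := par S b x = x.

Definition is_lcsa : Prop :=
  (forall b, lin (par S b)) /\
  (forall b x, par S b (par S b x) = par S b x) /\
  (forall b x, par S b (par S (~~ b) x) = 0) /\
  (forall x, par S false x + par S true x = x) /\
  lin (der S) /\
  (forall b x, der S (par S b x) = par S b (der S x)) /\
  (forall (c : C) x y z k,
      coef (br S (c *: x + y) z) k = c *: coef (br S x z) k + coef (br S y z) k) /\
  (forall (c : C) x y z k,
      coef (br S x (c *: y + z)) k = c *: coef (br S x y) k + coef (br S x z) k) /\
  (* the bracket is even: [L_a lambda L_b] in C[lambda] (x) L_(a+b) *)
  (forall a b x y k, homog a x -> homog b y ->
      homog (a (+) b) (coef (br S x y) k)) /\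
  (* [d x_lambda y] = - lambda [x_lambda y] *)
  (forall x y k, coef (br S (der S x) y) k =
      - (if k is k'.+1 then coef (br S x y) k' else 0)) /\
  (* [x_lambda d y] = (d + lambda) [x_lambda y] *)
  (forall x y k, coef (br S x (der S y)) k =
      der S (coef (br S x y) k) + (if k is k'.+1 then coef (br S x y) k' else 0)) /\
  (* skew-symmetry: [x_lambda y] = -(-1)^{|x||y|} [y_{-lambda-d} x] *)
  (forall a b x y k, homog a x -> homog b y ->
      coef (br S x y) k =
      - (sgn (a && b) *:
          \sum_(j < size (br S y x))
             ((-1) ^+ j *+ 'C(j, k)) *: iter (j - k) (der S) (coef (br S y x) j))) /\
  (* Jacobi identity:
     [x_lambda [y_mu z]] = [[x_lambda y]_{lambda+mu} z]
                           + (-1)^{|x||y|} [y_mu [x_lambda z]],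
     compared coefficient of lambda^i mu^j *)
  (forall a b x y z i j, homog a x -> homog b y ->
      coef (br S x (coef (br S y z) j)) i =
      subst_sum (fun p q => coef (br S (coef (br S x y) p) z) q) i j
      + sgn (a && b) *: coef (br S y (coef (br S x z) i)) j).

Definition derived (x : L) : Prop :=
  exists s : seq (C * (L * (L * nat))),
    x = \sum_(p <- s) p.1 *: coef (br S p.2.1 p.2.2.1) p.2.2.2.

Definition centralizer (P : L -> Prop) (x : L) : Prop :=
  forall y, P y -> forall k, coef (br S x y) k = 0.

Definition trivial_centralizer_of_derived : Prop :=
  forall x, centralizer derived x -> x = 0.

(* maps Psi_lambda : L -> C[lambda] (x) L *)
Definition lin_map (Psi : L -> seq L) : Prop :=
  forall (c : C) u v k, coef (Psi (c *: u + v)) k = c *: coef (Psi u) k + coef (Psi v) k.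

Definition has_degree (d : bool) (Psi : L -> seq L) : Prop :=
  forall b x k, homog b x -> homog (b (+) d) (coef (Psi x) k).

(* [Psi_lambda(u)_{lambda+mu} u] = 0 for all u, coefficientwise in lambda, mu *)
Definition super_commuting (Psi : L -> seq L) : Prop :=
  forall u i j,
    subst_sum (fun p q => coef (br S (coef (Psi u) p) u) q) i j = 0.

(* alpha is in the centroid Cent(L), with degree d:
   alpha_lambda([x_mu y]) = (-1)^{|x||alpha|} [x_mu alpha_lambda(y)]
                          = [alpha_lambda(x)_mu y],
   compared coefficient of lambda^i mu^j *)
Definition centroid_identities (d : bool) (alpha : L -> seq L) : Prop :=
  forall a b x y i j, homog a x -> homog b y ->
    coef (alpha (coef (br S x y) j)) i =
      sgn (a && d) *: coef (br S x (coef (alpha y) i)) j /\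
    coef (alpha (coef (br S x y) j)) i =
      coef (br S (coef (alpha x) i) y) j.

Definition in_centroid (d : bool) (alpha : L -> seq L) : Prop :=
  lin_map alpha /\ has_degree d alpha /\ centroid_identities d alpha.

End LCSA.

Section Current.

Variable C : comPzRingType.

(* A is an associative commutative C-algebra with unity, given as a
   commutative ring A with its structure map iota : C -> A
   (scalar action c . a := iota c * a). *)
Variables (L : lmodType C) (S : lcsa_data L).
Variables (A : comPzRingType) (iota : {rmorphism C -> A}).
Variables (M : lmodType C) (SM : lcsa_data M).

Definition bilin (W : lmodType C) (f : L -> A -> W) : Prop :=
  (forall (c : C) x y a, f (c *: x + y) a = c *: f x a + f y a) /\
  (forall (c : C) x a b, f x (iota c * a + b) = c *: f x a + f x b).

(* (M, t) is the tensor product L (x)_C A : t is bilinear and universal *)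
Definition is_tensor_product (t : L -> A -> M) : Prop :=
  bilin t /\
  forall (W : lmodType C) (f : L -> A -> W), bilin f ->
    exists g : M -> W, lin g /\ (forall x a, g (t x a) = f x a) /\
      forall h : M -> W, lin h -> (forall x a, h (t x a) = f x a) -> forall m, h m = g m.

Definition is_current (t : L -> A -> M) : Prop :=
  is_tensor_product t /\
  is_lcsa SM /\
  (forall b x a, par SM b (t x a) = t (par S b x) a) /\
  (forall x a, der SM (t x a) = t (der S x) a) /\
  (forall x y a b k, coef (br SM (t x a) (t y b)) k = t (coef (br S x y) k) (a * b)).

End Current.

(* Main.v *)
Require Import Defs.
From HB Require Import structures.
From mathcomp Require Import all_boot all_algebra.
From mathcomp Require Import complex reals.
From mathcomp Require Import boolp classical_sets.
Set Implicit Arguments.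
Unset Strict Implicit.
Unset Printing Implicit Defensive.
Import GRing.Theory.
Local Open Scope ring_scope.
Local Open Scope classical_set_scope.
Definition subspD (K : fieldType) (V : zmodType) (sc : K -> V -> V) (X : set V) :=
  X 0 /\ (forall c x y, X x -> X y -> X (sc c x + y)).

Lemma hyperplane (K : fieldType) (V : zmodType) (sc : K -> V -> V)
 (scDr : forall c x y, sc c (x + y) = sc c x + sc c y)
 (scDl : forall c e x, sc (c + e) x = sc c x + sc e x)
 (scA : forall c e x, sc c (sc e x) = sc (c * e) x)
 (sc1 : forall x, sc 1 x = x)
 (P : V -> Prop) (P0 : P 0) (PC : forall c x y, P x -> P y -> P (sc c x + y))
 (a : V) (Pa : ~ P a) :
 exists phi : V -> K, (forall c x y, phi (sc c x + y) = c * phi x + phi y) /\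
   (forall x, P x -> phi x = 0) /\ phi a = 1.
Proof.
have sc0 x : sc 0 x = 0.
  by apply: (@addrI _ (sc 0 x)); rewrite addr0 -scDl addr0.
have scN1 x : sc (-1) x = - x.
  by apply: (@addrI _ x); rewrite subrr -{1}(sc1 x) -scDl subrr sc0.
have sc0r c : sc c 0 = 0.
  by apply: (@addrI _ (sc c 0)); rewrite addr0 -scDr addr0.
pose subsp := @subspD K V sc.
pose Q (X : set V) := X = set0 \/ (subsp X /\ P `<=` X /\ ~ X a).
have QX X x : Q X -> X x -> subsp X /\ P `<=` X /\ ~ X a.
  by case=> // -> .
have [W [QW Wmax]] : exists A, Q A /\ forall B, A `<` B -> ~ Q B.
  apply: Zorn_bigcup => F FQ Ftot.
  have [[X0 FX0 [x0 X0x0]]|Hn] := pselect (exists2 X, F X & exists x, X x); last first.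
    left; apply/seteqP; split; last by [].
    by move=> x [X FX Xx]; exfalso; apply: Hn; exists X => //; exists x.
  have [[X00 _] [P0' _]] := QX _ _ (FQ _ FX0) X0x0.
  right; split; [split|split].
  - by exists X0.
  - move=> c x y [X1 FX1 X1x] [X2 FX2 X2y].
    have [S12|S21] := Ftot _ _ FX1 FX2.
    + have [[_ cl] _] := QX _ _ (FQ _ FX2) X2y.
      by exists X2 => //; apply: cl => //; apply: S12.
    + have [[_ cl] _] := QX _ _ (FQ _ FX1) X1x.
      by exists X1 => //; apply: cl => //; apply: S21.
  - by move=> x Px; exists X0 => //; apply: P0'.
  - move=> [X FX Xa]; have [_ [_ ]] := QX _ _ (FQ _ FX) Xa; exact.
have [[W0 Wcl] [PW Wa]] : subsp W /\ P `<=` W /\ ~ W a.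
  case: QW => // W0; exfalso; apply: (Wmax P); last first.
    right; split; [split|split] => //.
  rewrite W0; split => // /(_ 0 P0) //.
have Wsc c x : W x -> W (sc c x).
  by move=> Wx; rewrite -[sc c x]addr0; apply: Wcl.
have Wopp x : W x -> W (- x) by move=> Wx; rewrite -scN1; apply: Wsc.
have Wadd x y : W x -> W y -> W (x + y).
  by move=> Wx Wy; rewrite -[x]sc1; apply: Wcl.
have uniq c1 c2 w1 w2 : W w1 -> W w2 -> sc c1 a + w1 = sc c2 a + w2 -> c1 = c2.
  move=> W1 W2 E; apply/eqP; apply/negP => /negP Hne.
  have Hne' : c1 - c2 != 0 by rewrite subr_eq0.
  have E2 : sc (c1 - c2) a = w2 - w1.
    rewrite scDl -mulN1r -scA scN1.
    have -> : sc c1 a = sc c2 a + w2 - w1 by rewrite -E addrK.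
    by rewrite addrAC [sc c2 a + w2]addrC addrK.
  apply: Wa; have -> : a = sc ((c1 - c2)^-1) (sc (c1 - c2) a).
    by rewrite scA mulVf // sc1.
  by rewrite E2; apply/Wsc/Wadd => //; apply: Wopp.
have dec v : exists c, exists w, W w /\ v = sc c a + w.
  apply: contrapT => Hn.
  pose W' := fun u => exists c, exists w, W w /\ u = sc c v + w.
  apply: (Wmax W'); last first.
    right; split; [split|split].
    - by exists 0, 0; rewrite sc0 addr0.
    - move=> e x y [c1 [w1 [W1 ->]]] [c2 [w2 [W2 ->]]].
      exists (e * c1 + c2), (sc e w1 + w2); split; first exact: Wcl.
      by rewrite scDr scA scDl addrACA.
    - by move=> x Px; exists 0, x; rewrite sc0 add0r; split => //; apply: PW.
    - move=> [c [w [Ww Ea]]].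
      have [c0|cn0] := eqVneq c 0.
        by apply: Wa; rewrite Ea c0 sc0 add0r.
      apply: Hn; exists c^-1, (sc c^-1 (- w)); split; first by apply/Wsc/Wopp.
      by rewrite Ea scDr scA mulVf // sc1 -addrA -scDr subrr sc0r addr0.
  split.
    by move=> x Wx; exists 0, x; rewrite sc0 add0r.
  move=> S; have : W' v by exists 1, 0; rewrite sc1 addr0.
  move=> /S Wv; apply: Hn; exists 0, v; by rewrite sc0 add0r.
pose phi v := projT1 (cid (dec v)).
have phiP v : exists w, W w /\ v = sc (phi v) a + w := projT2 (cid (dec v)).
exists phi; split; last split.
- move=> c x y.
  have [wx [Wx Ex]] := phiP x; have [wy [Wy Ey]] := phiP y.
  have [w [Ww E]] := phiP (sc c x + y).
  apply: (uniq _ _ w (sc c wx + wy) Ww (Wcl _ _ _ Wx Wy)).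
  by rewrite -E {1}Ex {1}Ey scDr scA scDl addrACA.
- move=> x Px; have [w [Ww E]] := phiP x.
  by apply: (uniq _ _ w x Ww (PW _ Px)); rewrite -E sc0 add0r.
- have [w [Ww E]] := phiP a.
  by apply: (uniq _ _ w 0 Ww W0); rewrite -E sc1 addr0.
Qed.

Local Close Scope classical_set_scope.

Section Generic.
Variable C : comPzRingType.

Lemma lin0 (U V : lmodType C) (f : U -> V) : lin f -> f 0 = 0.
Proof.
move=> Hf; have E := Hf 1 0 0; rewrite !scale1r addr0 in E.
by apply: (@addrI _ (f 0)); rewrite addr0 -E.
Qed.

Lemma linD (U V : lmodType C) (f : U -> V) : lin f -> forall x y, f (x + y) = f x + f y.
Proof. by move=> Hf x y; have := Hf 1 x y; rewrite !scale1r. Qed.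

Lemma linZ (U V : lmodType C) (f : U -> V) : lin f -> forall c x, f (c *: x) = c *: f x.
Proof. by move=> Hf c x; have := Hf c x 0; rewrite !addr0 (lin0 Hf) addr0. Qed.

Lemma linN (U V : lmodType C) (f : U -> V) : lin f -> forall x, f (- x) = - f x.
Proof. by move=> Hf x; rewrite -scaleN1r (linZ Hf) scaleN1r. Qed.

Lemma linB (U V : lmodType C) (f : U -> V) : lin f -> forall x y, f (x - y) = f x - f y.
Proof. by move=> Hf x y; rewrite (linD Hf) (linN Hf). Qed.

Lemma linS (U V : lmodType C) (f : U -> V) : lin f ->
  forall (I : Type) (s : seq I) (F : I -> U), f (\sum_(i <- s) F i) = \sum_(i <- s) f (F i).
Proof.
move=> Hf I s F; elim: s => [|a s IH]; first by rewrite !big_nil (lin0 Hf).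
by rewrite !big_cons (linD Hf) IH.
Qed.

Lemma lin_comp (U V W : lmodType C) (f : V -> W) (g : U -> V) :
  lin f -> lin g -> lin (fun x => f (g x)).
Proof. by move=> Hf Hg c x y; rewrite Hg Hf. Qed.

Lemma lin_scale (U V : lmodType C) (f : U -> V) (e : C) :
  lin f -> lin (fun x => e *: f x).
Proof. by move=> Hf c x y; rewrite Hf scalerDr !scalerA mulrC. Qed.

Lemma lin_sub (U V : lmodType C) (f g : U -> V) :
  lin f -> lin g -> lin (fun x => f x - g x).
Proof.
move=> Hf Hg c x y; rewrite Hf Hg scalerBr.
by rewrite opprD !addrA; congr (_ + _); rewrite addrAC.
Qed.

Lemma coef_map (U V : lmodType C) (g : U -> V) (s : seq U) k :
  g 0 = 0 -> coef (map g s) k = g (coef s k).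
Proof.
move=> g0; rewrite /coef; elim: s k => [|a s IH] [|k] //=; by rewrite nth_nil.
Qed.

Lemma subst_inv (N : lmodType C) (F : nat -> nat -> N) :
  (forall i j, subst_sum F i j = 0) -> forall p q, F p q = 0.
Proof.
move=> H p; elim/ltn_ind: p => p IH q.
have := H p q; rewrite /subst_sum big_ord_recl big1.
  by rewrite addr0 subn0 addn0 bin0 mulr1n.
move=> i _; rewrite IH ?mul0rn //=.
by rewrite /bump /= add1n subnS prednK ?subn_gt0 // leq_subr.
Qed.

Variable N : lmodType C.
Variable T : lcsa_data N.
Hypothesis HT : is_lcsa T.

Lemma br_linl z k : lin (fun x => coef (br T x z) k).
Proof. by case: HT => _ [_ [_ [_ [_ [_ [H _]]]]]] c x y; apply: H. Qed.

Lemma br_linr x k : lin (fun y => coef (br T x y) k).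
Proof. by case: HT => _ [_ [_ [_ [_ [_ [_ [H _]]]]]]] c y z; apply: H. Qed.

Lemma par_lin b : lin (par T b).
Proof. by case: HT => H _. Qed.

Lemma par_idem b x : par T b (par T b x) = par T b x.
Proof. by case: HT => _ [H _]. Qed.

End Generic.

Section Main.
Variable R : realType.
Local Notation K := (R[i] : fieldType).
Variables (L : lmodType R[i]) (S : lcsa_data L).
Variables (A : comPzRingType) (iota : {rmorphism R[i] -> A}).
Variables (M : lmodType R[i]) (SM : lcsa_data M) (t : L -> A -> M).
Hypothesis HS : is_lcsa S.
Hypothesis HZ : trivial_centralizer_of_derived S.
Hypothesis HC : is_current S iota SM t.

Let HT : is_tensor_product iota t := HC.1.
Let HSM : is_lcsa SM := HC.2.1.

Lemma tl c x y a : t (c *: x + y) a = c *: t x a + t y a.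
Proof. by case: HT => -[H _] _; apply: H. Qed.

Lemma tr c x a b : t x (iota c * a + b) = c *: t x a + t x b.
Proof. by case: HT => -[_ H] _; apply: H. Qed.

Lemma tlin a : lin (fun x => t x a).
Proof. by move=> c x y; apply: tl. Qed.

Lemma t0l a : t 0 a = 0. Proof. exact: (lin0 (tlin a)). Qed.

Lemma tDr x a b : t x (a + b) = t x a + t x b.
Proof. by have := tr 1 x a b; rewrite rmorph1 mul1r scale1r. Qed.

Lemma t0r x : t x 0 = 0.
Proof. by apply: (@addrI _ (t x 0)); rewrite -tDr !addr0. Qed.

Lemma tZr c x a : t x (iota c * a) = c *: t x a.
Proof. by have := tr c x a 0; rewrite addr0 t0r addr0. Qed.

Lemma tZl c x a : t (c *: x) a = c *: t x a.
Proof. exact: (linZ (tlin a)). Qed.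

Lemma uniq_ext (W : lmodType R[i]) (h1 h2 : M -> W) :
  lin h1 -> lin h2 -> (forall x a, h1 (t x a) = h2 (t x a)) -> forall m, h1 m = h2 m.
Proof.
move=> H1 H2 E m.
have Hb : bilin iota (fun x a => h1 (t x a)).
  split=> [c x y a|c x a b]; [by rewrite tl H1 | by rewrite tr H1].
have [g [_ [_ gu]]] := HT.2 W _ Hb.
by rewrite (gu h1 H1 (fun _ _ => erefl)) (gu h2 H2 (fun x a => esym (E x a))).
Qed.

Lemma lift_ex (W : lmodType R[i]) (f : L -> A -> W) :
  bilin iota f -> exists g : M -> W, lin g /\ forall x a, g (t x a) = f x a.
Proof. by move=> Hf; have [g [Hg [Hgt _]]] := HT.2 W _ Hf; exists g. Qed.

Definition sumt (s : seq (L * A)) : M := \sum_(p <- s) t p.1 p.2.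

Lemma span_M m : exists s, m = sumt s.
Proof.
apply: contrapT => Hn.
pose P := fun m => exists s, m = sumt s.
have P0 : P 0 by exists [::]; rewrite /sumt big_nil.
have PC : forall c x y, P x -> P y -> P (c *: x + y).
  move=> c x y [sx ->] [sy ->]; exists ([seq (c *: p.1, p.2) | p <- sx] ++ sy).
  rewrite /sumt big_cat big_map /=; congr (_ + _).
  elim: sx => [|p sx IH]; first by rewrite !big_nil scaler0.
  by rewrite !big_cons scalerDr IH tZl.
have [phi [Hphi [Hphi0 Hphia]]] := @hyperplane K M (fun c x => c *: x)
  (fun c x y => scalerDr c x y) (fun c e x => scalerDl x c e)
  (fun c e x => scalerA c e x) (fun x => scale1r x) P P0 PC m Hn.
have Hl : lin (phi : M -> R[i]^o) by move=> c x y; apply: Hphi.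
have H0 : lin ((fun _ => 0) : M -> R[i]^o) by move=> c x y /=; rewrite scaler0 addr0.
have := uniq_ext Hl H0 _ m; rewrite Hphia => E.
have : (1 : R[i]) = 0 by apply: E => x a; apply: Hphi0; exists [:: (x, a)]; rewrite /sumt big_seq1.
by move/eqP; rewrite oner_eq0.
Qed.

Definition linA (phi : A -> R[i]) := forall c a b, phi (iota c * a + b) = c * phi a + phi b.
Definition isG (g : M -> L) :=
  lin g /\ exists phi, linA phi /\ forall x a, g (t x a) = phi a *: x.

Definition spanA (s : seq A) (a : A) :=
  exists cs : seq (R[i] * A), all (fun q => q.2 \in s) cs /\ a = \sum_(q <- cs) iota q.1 * q.2.

Lemma add_in r y b : b \in map snd r ->
  exists r', map snd r' = map snd r /\ sumt r + t y b = sumt r'.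
Proof.
elim: r => [|p r IH] //=; rewrite in_cons => /orP [/eqP ->|Hb].
  exists ((p.1 + y, p.2) :: r); split => //.
  by rewrite /sumt !big_cons /= addrAC (linD (tlin _)).
have [r' [E1 E2]] := IH Hb; exists (p :: r'); split; first by rewrite /= E1.
by rewrite /sumt !big_cons -/(sumt r) -/(sumt r') -addrA E2.
Qed.

Lemma merge cs rest x : all (fun q => q.2 \in map snd rest) cs ->
  exists rest', map snd rest' = map snd rest /\
    sumt rest + t x (\sum_(q <- cs) iota q.1 * q.2) = sumt rest'.
Proof.
elim: cs => [|q cs IH] /=.
  by move=> _; exists rest; rewrite big_nil t0r addr0.
move=> /andP [Hq Hcs]; have [r'' [E1 E2]] := IH Hcs.
have Hq' : q.2 \in map snd r'' by rewrite E1.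
have [r' [F1 F2]] := add_in (q.1 *: x) Hq'.
exists r'; split; first by rewrite F1 E1.
by rewrite big_cons tDr tZr -tZl addrCA E2 addrC F2.
Qed.

Lemma gsumt g phi : lin g -> (forall x a, g (t x a) = phi a *: x) ->
  forall s, g (sumt s) = \sum_(p <- s) phi p.2 *: p.1.
Proof. by move=> Hg Hgt s; rewrite /sumt (linS Hg); apply: eq_bigr => p _; rewrite Hgt. Qed.

Lemma sep_list n : forall s, (size s <= n)%N -> forall m, m = sumt s ->
  (forall g, isG g -> g m = 0) -> m = 0.
Proof.
elim: n => [|n IH] [|p rest] //=; try by move=> _ m ->; rewrite /sumt big_nil.
rewrite ltnS => Hsz m Em Hg.
have Em' : m = t p.1 p.2 + sumt rest by rewrite Em /sumt big_cons.
have [[cs [Hall Hp]]|Hns] := pselect (spanA (map snd rest) p.2).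
  have [rest' [E1 E2]] := merge p.1 Hall.
  apply: (IH rest') => //.
    by rewrite -(size_map snd) E1 size_map.
  by rewrite Em' Hp addrC E2.
pose sc := fun (c : R[i]) (a : A) => iota c * a.
have scDr c x y : sc c (x + y) = sc c x + sc c y by rewrite /sc mulrDr.
have scDl c e x : sc (c + e) x = sc c x + sc e x by rewrite /sc rmorphD mulrDl.
have scA c e x : sc c (sc e x) = sc (c * e) x by rewrite /sc rmorphM mulrA.
have sc1 x : sc 1 x = x by rewrite /sc rmorph1 mul1r.
have P0 : spanA (map snd rest) 0 by exists [::]; rewrite big_nil.
have PC c x y : spanA (map snd rest) x -> spanA (map snd rest) y ->
    spanA (map snd rest) (sc c x + y).
  move=> [cx [Hx ->]] [cy [Hy ->]].
  exists ([seq (c * q.1, q.2) | q <- cx] ++ cy); split.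
    by rewrite all_cat all_map Hy andbT.
  rewrite big_cat big_map /sc mulr_sumr; congr (_ + _).
  by apply: eq_bigr => q _ /=; rewrite rmorphM mulrA.
have [phi [Hphi [Hphi0 Hphia]]] := @hyperplane K A sc scDr scDl scA sc1 _ P0 PC _ Hns.
have Hb : bilin iota (fun (x : L) (a : A) => phi a *: x).
  split => [c x y a|c x a b].
    by rewrite scalerDr !scalerA mulrC.
  by rewrite (Hphi c a b) scalerDl scalerA.
have [g [Hgl Hgt]] := lift_ex Hb.
have Gg : isG g by split => //; exists phi.
have Hgm := Hg g Gg.
have Hz : \sum_(q <- rest) phi q.2 *: q.1 = 0.
  rewrite big1_seq // => q /= Hq; rewrite Hphi0 ?scale0r //.
exists [:: (1, q.2)]; split; first by rewrite /= andbT map_f.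
  by rewrite big_seq1 /= rmorph1 mul1r.
rewrite Em' (linD Hgl) Hgt (gsumt Hgl Hgt) Hphia scale1r Hz addr0 in Hgm.
apply: (IH rest) => //.
by rewrite Em' Hgm t0l add0r.
Qed.

Lemma sep m : (forall g, isG g -> g m = 0) -> m = 0.
Proof. by have [s Es] := span_M m; apply: (sep_list (leqnn (size s)) Es). Qed.

Local Notation bM m n k := (coef (br SM m n) k).
Local Notation bL x y k := (coef (br S x y) k).

Lemma mulM_ex a : exists g : M -> M, lin g /\ forall x c, g (t x c) = t x (c * a).
Proof.
apply: lift_ex; split => [c x y b|c x b e]; first by rewrite tl.
by rewrite mulrDl -mulrA tr.
Qed.

Definition mulM a : M -> M := projT1 (cid (mulM_ex a)).
Lemma mulM_lin a : lin (mulM a). Proof. exact: (projT2 (cid (mulM_ex a))).1. Qed.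
Lemma mulM_t a x c : mulM a (t x c) = t x (c * a).
Proof. exact: (projT2 (cid (mulM_ex a))).2. Qed.

Lemma hbr x y a b k : bM (t x a) (t y b) k = t (bL x y k) (a * b).
Proof. by case: HC => _ [_ [_ [_ H]]]; apply: H. Qed.

Lemma hpar b x a : par SM b (t x a) = t (par S b x) a.
Proof. by case: HC => _ [_ [H _]]; apply: H. Qed.

Lemma M1l a m n q : bM (mulM a m) n q = mulM a (bM m n q).
Proof.
move: m; apply: uniq_ext.
- exact: (lin_comp (br_linl HSM n q) (mulM_lin a)).
- exact: (lin_comp (mulM_lin a) (br_linl HSM n q)).
move=> x c; rewrite mulM_t; move: n; apply: uniq_ext.
- exact: br_linr HSM _ q.
- exact: (lin_comp (mulM_lin a) (br_linr HSM _ q)).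
by move=> y e; rewrite !hbr mulM_t mulrAC.
Qed.

Lemma M1r a m n q : bM m (mulM a n) q = mulM a (bM m n q).
Proof.
move: n; apply: uniq_ext.
- exact: (lin_comp (br_linr HSM m q) (mulM_lin a)).
- exact: (lin_comp (mulM_lin a) (br_linr HSM m q)).
move=> y e; rewrite mulM_t; move: m; apply: uniq_ext.
- exact: br_linl HSM _ q.
- exact: (lin_comp (mulM_lin a) (br_linl HSM _ q)).
by move=> x c; rewrite !hbr mulM_t mulrA.
Qed.

Lemma M2 x a : t x a = mulM a (t x 1).
Proof. by rewrite mulM_t mul1r. Qed.

Lemma M3 a b m : mulM b (mulM a m) = mulM (a * b) m.
Proof.
move: m; apply: uniq_ext.
- exact: (lin_comp (mulM_lin b) (mulM_lin a)).
- exact: mulM_lin.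
by move=> x c; rewrite !mulM_t mulrA.
Qed.

Lemma G3l g : isG g -> forall m y q, bL (g m) y q = g (bM m (t y 1) q).
Proof.
move=> [Hg [phi [_ Hgt]]] m y q; move: m; apply: uniq_ext.
- exact: (lin_comp (br_linl HS y q) Hg).
- exact: (lin_comp Hg (br_linl HSM _ q)).
by move=> x c; rewrite hbr !Hgt mulr1 (linZ (br_linl HS y q)).
Qed.

Lemma G3r g : isG g -> forall n y q, bL y (g n) q = g (bM (t y 1) n q).
Proof.
move=> [Hg [phi [_ Hgt]]] n y q; move: n; apply: uniq_ext.
- exact: (lin_comp (br_linr HS y q) Hg).
- exact: (lin_comp Hg (br_linr HSM _ q)).
by move=> x c; rewrite hbr !Hgt mul1r (linZ (br_linr HS y q)).
Qed.

Lemma G4 g b : isG g -> forall m, g (par SM b m) = par S b (g m).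
Proof.
move=> [Hg [phi [_ Hgt]]]; apply: uniq_ext.
- exact: (lin_comp Hg (par_lin HSM b)).
- exact: (lin_comp (par_lin HS b) Hg).
by move=> x c; rewrite hpar !Hgt (linZ (par_lin HS b)).
Qed.

Lemma ZM m : (forall y q, bM m (t y 1) q = 0) -> m = 0.
Proof.
move=> Hm; apply: sep => g Gg; apply: HZ => y _ k.
by rewrite (G3l Gg) Hm (lin0 Gg.1).
Qed.

Variables (d : bool) (Psi : M -> seq M).
Hypotheses (HPl : lin_map Psi) (HPd : has_degree SM d Psi) (HPs : super_commuting SM Psi).
Hypothesis HL : forall (d : bool) (Psi : L -> seq L),
      lin_map Psi -> has_degree S d Psi -> super_commuting S Psi ->
      in_centroid S d Psi.

Local Notation psi m p := (coef (Psi m) p).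

Lemma psi_lin p : lin (fun m => psi m p).
Proof. by move=> c u v; apply: HPl. Qed.

Lemma sc0 u p q : bM (psi u p) u q = 0.
Proof. exact: (subst_inv (HPs u) p q). Qed.

Lemma P1 m n p q : bM (psi m p) n q = - bM (psi n p) m q.
Proof.
have := sc0 (m + n) p q.
rewrite (linD (psi_lin p)) (linD (br_linl HSM _ q)) !(linD (br_linr HSM _ q)) !sc0.
by rewrite add0r addr0 => /eqP; rewrite addr_eq0 => /eqP.
Qed.

Lemma stepC a x p : psi (t x a) p = mulM a (psi (t x 1) p).
Proof.
apply/eqP; rewrite -subr_eq0; apply/eqP; apply: ZM => y q.
rewrite (linB (br_linl HSM _ q)) P1 [t x a]M2 M1r P1 (linN (mulM_lin a)) opprK M1l.
by rewrite subrr.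
Qed.

Lemma G1 g : isG g -> in_centroid S d (fun x => map g (Psi (t x 1))).
Proof.
move=> Gg; have g0 := lin0 Gg.1.
apply: HL.
- by move=> c u v k; rewrite !coef_map // tl HPl Gg.1.
- move=> b x k Hx; rewrite coef_map //; rewrite /homog -(G4 _ Gg).
  have Hx' : homog SM b (t x 1) by rewrite /homog hpar Hx.
  by rewrite (HPd k Hx').
- move=> u i j; rewrite /subst_sum big1 // => k _.
  by rewrite coef_map // (G3l Gg) sc0 g0 mul0rn.
Qed.

Lemma D2 a' b' x y i j : homog S a' x -> homog S b' y ->
  psi (t (bL x y j) 1) i = bM (psi (t x 1) i) (t y 1) j.
Proof.
move=> Hx Hy; apply/eqP; rewrite -subr_eq0; apply/eqP; apply: sep => g Gg.
have g0 := lin0 Gg.1.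
have [_ [_ Hc]] := G1 Gg; have [_ E2] := Hc _ _ _ _ i j Hx Hy.
move: E2; rewrite !coef_map // => E2.
by rewrite (linB Gg.1) -(G3l Gg) E2 subrr.
Qed.

Lemma D1 a' b' x y i j : homog S a' x -> homog S b' y ->
  psi (t (bL x y j) 1) i = sgn _ (a' && d) *: bM (t x 1) (psi (t y 1) i) j.
Proof.
move=> Hx Hy; apply/eqP; rewrite -subr_eq0; apply/eqP; apply: sep => g Gg.
have g0 := lin0 Gg.1.
have [_ [_ Hc]] := G1 Gg; have [E1 _] := Hc _ _ _ _ i j Hx Hy.
move: E1; rewrite !coef_map // => E1.
by rewrite (linB Gg.1) (linZ Gg.1) -(G3r Gg) E1 subrr.
Qed.

Lemma C2pure a' b' x y a b i j : homog S a' x -> homog S b' y ->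
  psi (bM (t x a) (t y b) j) i = bM (psi (t x a) i) (t y b) j.
Proof.
move=> Hx Hy; rewrite hbr (stepC (a * b)) (D2 _ _ Hx Hy) (stepC a x i) [t y b]M2 M1r M1l M3.
by [].
Qed.

Lemma C1pure a' b' x y a b i j : homog S a' x -> homog S b' y ->
  psi (bM (t x a) (t y b) j) i = sgn _ (a' && d) *: bM (t x a) (psi (t y b) i) j.
Proof.
move=> Hx Hy; rewrite hbr (stepC (a * b)) (D1 _ _ Hx Hy) [t x a]M2 (stepC b y i) M1l M1r M3.
by rewrite (linZ (mulM_lin _)) mulrC.
Qed.

Lemma ext2 (F G : M -> M -> M) :
  (forall n, lin (F^~ n)) -> (forall n, lin (G^~ n)) ->
  (forall m, lin (F m)) -> (forall m, lin (G m)) ->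
  (forall x a y b, F (t x a) (t y b) = G (t x a) (t y b)) -> forall m n, F m n = G m n.
Proof.
move=> F1 G1' F2 G2 E m n; move: m; apply: uniq_ext => // x a.
by move: n; apply: uniq_ext => // y b; apply: E.
Qed.

Lemma main_sec : in_centroid SM d Psi.
Proof.
split => //; split => // a' b' m n i j Hm Hn.
rewrite -Hm -Hn; clear Hm Hn; move: m n => m0 n0; split.
- suff : forall m n, (fun m n => psi (bM (par SM a' m) (par SM b' n) j) i) m n =
     (fun m n => sgn _ (a' && d) *: bM (par SM a' m) (psi (par SM b' n) i) j) m n.
    by apply.
  apply: ext2.
  + move=> n /=; apply: (lin_comp (psi_lin i)).
    exact: (lin_comp (br_linl HSM _ j) (par_lin HSM a')).
  + move=> n /=; apply: lin_scale.
    exact: (lin_comp (br_linl HSM _ j) (par_lin HSM a')).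
  + move=> m /=; apply: (lin_comp (psi_lin i)).
    exact: (lin_comp (br_linr HSM _ j) (par_lin HSM b')).
  + move=> m /=; apply: lin_scale; apply: (lin_comp (br_linr HSM _ j)).
    exact: (lin_comp (psi_lin i) (par_lin HSM b')).
  + move=> x a y b /=; rewrite !hpar; apply: C1pure.
    * exact: (par_idem HS).
    * exact: (par_idem HS).
- suff : forall m n, (fun m n => psi (bM (par SM a' m) (par SM b' n) j) i) m n =
     (fun m n => bM (psi (par SM a' m) i) (par SM b' n) j) m n.
    by apply.
  apply: ext2.
  + move=> n /=; apply: (lin_comp (psi_lin i)).
    exact: (lin_comp (br_linl HSM _ j) (par_lin HSM a')).
  + move=> n /=; apply: (lin_comp (br_linl HSM _ j)).
    exact: (lin_comp (psi_lin i) (par_lin HSM a')).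
  + move=> m /=; apply: (lin_comp (psi_lin i)).
    exact: (lin_comp (br_linr HSM _ j) (par_lin HSM b')).
  + move=> m /=; exact: (lin_comp (br_linr HSM _ j) (par_lin HSM b')).
  + move=> x a y b /=; rewrite !hpar; apply: C2pure.
    * exact: (par_idem HS).
    * exact: (par_idem HS).
Qed.

End Main.

Theorem mainTheorem9 (R : realType)
    (L : lmodType R[i]) (S : lcsa_data L)
    (A : comPzRingType) (iota : {rmorphism R[i] -> A})
    (M : lmodType R[i]) (SM : lcsa_data M) (t : L -> A -> M) :
  is_lcsa S ->
  trivial_centralizer_of_derived S ->
  is_current S iota SM t ->
  (forall (d : bool) (Psi : L -> seq L),
      lin_map Psi -> has_degree S d Psi -> super_commuting S Psi ->
      in_centroid S d Psi) ->
  forall (d : bool) (Psi : M -> seq M),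
    lin_map Psi -> has_degree SM d Psi -> super_commuting SM Psi ->
    in_centroid SM d Psi.
Proof.
move=> HS HZ HC HL d Psi HPl HPd HPs.
exact: (main_sec HS HZ HC HPl HPd HPs HL).
Qed.
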